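(* The class of weakly right coherent monoids is closed under retracts: if $S$ is a weakly right coherent monoid and $T$ is a monoid that is a retract of $S$, then $T$ is weakly right coherent.
   Context: A monoid $M$ is weakly right coherent if every finitely generated right ideal of $M$ is finitely presented as a right $M$-act (known to be equivalent to $M$ being right ideal Howson and finitely right equated: the intersection of any two finitely generated right ideals is finitely generated, and every $\mathbf{r}_M(a)=\{(s,t)\mid as=at\}$ is finitely generated as a right congruence). A retract of a semigroup $S$ is a subsemigroup $T$ for which there is a homomorphism $\phi:S\to T$ with $t\phi=t$ for all $t\in T$. *)

(* Defs.v *)
From mathcomp Require Import all_boot.
From Stdlib Require Import List.

Set Implicit Arguments.
Unset Strict Implicit.
Unset Printing Implicit Defensive.

Record monoid := Monoid {
  mcarrier :> Type;
  mmul : mcarrier -> mcarrier -> mcarrier;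
  mone : mcarrier;
  mmulA : forall a b c, mmul a (mmul b c) = mmul (mmul a b) c;
  mmul1l : forall a, mmul mone a = a;
  mmul1r : forall a, mmul a mone = a
}.

Arguments mmul {m}.
Arguments mone {m}.

(** Elements of the free right M-act on n generators: pairs (i, s) standing for x_i s,
    with action (i, s) . m = (i, s m). *)
Definition free_act (M : monoid) (n : nat) := ('I_n * M)%type.

Inductive gen_cong (M : monoid) (n : nat) (H : list (free_act M n * free_act M n))
  : free_act M n -> free_act M n -> Prop :=
| gc_base u v : In (u, v) H -> gen_cong H u v
| gc_refl u : gen_cong H u u
| gc_sym u v : gen_cong H u v -> gen_cong H v u
| gc_trans u v w : gen_cong H u v -> gen_cong H v w -> gen_cong H u w
| gc_act u v (m : M) : gen_cong H u v ->
    gen_cong H (u.1, mmul u.2 m) (v.1, mmul v.2 m).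

Definition fg_right_ideal (M : monoid) (X : list M) : M -> Prop :=
  fun x => exists a, In a X /\ exists m : M, x = mmul a m.

(** A subset I of M, closed under right multiplication and regarded as a right M-act
    (action by right multiplication), is finitely presented: there is a surjective act
    morphism  F_n -> I,  (i, s) |-> g_i s, from the free act of finite rank n whose
    kernel congruence is generated by finitely many pairs (so I is isomorphic to
    F_n / rho with rho finitely generated). *)
Definition fin_presented_right_act (M : monoid) (I : M -> Prop) : Prop :=
  exists (n : nat) (g : 'I_n -> M),
    (forall i, I (g i)) /\
    (forall x, I x -> exists (i : 'I_n) (m : M), x = mmul (g i) m) /\
    exists H : list (free_act M n * free_act M n),
      (forall u v, In (u, v) H -> mmul (g u.1) u.2 = mmul (g v.1) v.2) /\
      (forall u v : free_act M n,
          mmul (g u.1) u.2 = mmul (g v.1) v.2 -> gen_cong H u v).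

Definition weakly_right_coherent (M : monoid) : Prop :=
  forall X : list M, fin_presented_right_act (fg_right_ideal X).

(* Main.v *)
Require Import Defs.
From mathcomp Require Import all_boot.
From Stdlib Require Import List.
From Stdlib Require Import ClassicalEpsilon.

Lemma choose2 (A B C : Type) (P : A -> B -> C -> Prop) :
  (forall a, exists b c, P a b c) -> exists f h, forall a, P a (f a) (h a).
Proof.
  move=> HP.
  have HP' : forall a, exists bc : B * C, P a bc.1 bc.2.
    move=> a; case: (HP a) => b [c Hb]; by exists (b, c).
  exists (fun a => (proj1_sig (constructive_indefinite_description _ (HP' a))).1).
  exists (fun a => (proj1_sig (constructive_indefinite_description _ (HP' a))).2).
  move=> a; exact: (proj2_sig (constructive_indefinite_description _ (HP' a))).
Qed.

Lemma in_In (T : eqType) (x : T) (s : seq.seq T) : x \in s -> In x s.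
Proof.
  elim: s => [|y s IH] //=; rewrite seq.in_cons => /orP [/eqP ->|/IH]; auto.
Qed.

Theorem mainTheorem4 (S T : monoid) (iota : T -> S) (phi : S -> T) :
  (forall a b : T, iota (mmul a b) = mmul (iota a) (iota b)) ->
  (forall a b : S, phi (mmul a b) = mmul (phi a) (phi b)) ->
  (forall t : T, phi (iota t) = t) ->
  weakly_right_coherent S -> weakly_right_coherent T.
Proof.
  move=> Hi Hp Hpi HS X.
  pose k := length X.
  pose G (j : 'I_k) := List.nth j X mone.
  have GIn : forall j : 'I_k, In (G j) X.
    move=> j; apply: nth_In; apply/ltP; exact: ltn_ord.
  case: (HS (List.map iota X)) => n [g [Hg [Hcov [H [Hsound Hcomp]]]]].
  have Ep : forall j : 'I_k, exists (i : 'I_n) (m : S), iota (G j) = mmul (g i) m.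
    move=> j; apply: Hcov; exists (iota (G j)); split.
      by apply: in_map.
    by exists mone; rewrite mmul1r.
  have Eq : forall i : 'I_n, exists (j : 'I_k) (m : S), g i = mmul (iota (G j)) m.
    move=> i; case: (Hg i) => a [Ha [m Hm]].
    case/in_map_iff: Ha => x [Hx HxX].
    case: (In_nth _ _ mone HxX) => j [Hj Hjx].
    have Hj' : (j < k)%N by apply/ltP.
    exists (Ordinal Hj'), m; rewrite /G /= Hjx Hx //.
  case: (@choose2 _ _ _ _ Ep) => p [c Hc].
  case: (@choose2 _ _ _ _ Eq) => q [d Hd]. simpl in Hc, Hd.
  have key : forall i s, mmul (G (q i)) (phi (mmul (d i) s)) = phi (mmul (g i) s).
    move=> i s; rewrite (Hd i). rewrite -(@mmulA S). rewrite (Hp (iota _)). rewrite Hpi; done.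
  pose fa (uv : free_act S n * free_act S n) : free_act T k * free_act T k :=
    ((q uv.1.1, phi (mmul (d uv.1.1) uv.1.2)), (q uv.2.1, phi (mmul (d uv.2.1) uv.2.2))).
  pose fb (j : 'I_k) : free_act T k * free_act T k :=
    ((j, mone), (q (p j), phi (mmul (d (p j)) (c j)))).
  pose H' := List.map fa H ++ List.map fb (enum 'I_k).
  exists k, G; split; [|split].
  - move=> j; exists (G j); split; first exact: GIn.
    by exists mone; rewrite mmul1r.
  - move=> x [a [Ha [m Hm]]].
    case: (In_nth _ _ mone Ha) => j [Hj Hjx].
    have Hj' : (j < k)%N by apply/ltP.
    exists (Ordinal Hj'), m; rewrite /G /= Hjx //.
  exists H'; split.
  - move=> u v Hin; case: (in_app_or _ _ _ Hin) => {}Hin.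
    + case: (proj1 (in_map_iff _ _ _) Hin) => [[u0 v0] [E Hin']].
      case: E => <- <- /=.
      rewrite !key; congr phi; exact: Hsound.
    + case: (proj1 (in_map_iff _ _ _) Hin) => [j [E _]].
      case: E => <- <- /=.
      by rewrite mmul1r key -Hc Hpi.
  - pose F (w : free_act S n) : free_act T k := (q w.1, phi (mmul (d w.1) w.2)).
    have HF : forall w1 w2, gen_cong H w1 w2 -> gen_cong H' (F w1) (F w2).
      move=> w1 w2; elim => {w1 w2}.
      + move=> u v Huv; apply: gc_base; apply: in_or_app; left.
        by apply: (in_map fa _ (u, v)).
      + move=> u; exact: gc_refl.
      + move=> u v _; exact: gc_sym.
      + move=> u v w _ H1 _ H2; exact: gc_trans H1 H2.
      + move=> u v m _ IH.
        have := gc_act (phi m) IH.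
        by rewrite /F /= !mmulA !Hp.
    have Hb : forall (j : 'I_k) (s : T),
        gen_cong H' (j, s) (F (p j, mmul (c j) (iota s))).
      move=> j s.
      have hb : gen_cong H' (fb j).1 (fb j).2.
        apply: gc_base; apply: in_or_app; right.
        rewrite -surjective_pairing; apply: in_map; apply: in_In; exact: mem_enum.
      have := gc_act s hb.
      by rewrite /F /= mmul1l (@mmulA S) (Hp _ (iota s)) Hpi.
    move=> [j s] [l t] /= E.
    apply: gc_trans (Hb j s) _.
    apply: gc_trans _ (gc_sym (Hb l t)).
    apply: HF; apply: Hcomp => /=.
    by rewrite !mmulA -!Hc -!Hi E.
Qed.
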